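(* Let $\lambda=(\lambda_1\ge\dots\ge\lambda_N)$ be a dominant coweight of $\operatorname{GL}(N)$, $|\lambda|=\sum_i\lambda_i$, $n(\lambda)=\sum_{i=1}^N(i-1)\lambda_i$. Consider the power series $$P_\lambda(t)=\sum_{\vec\lambda}t^{2\Delta(\lambda,\vec\lambda)}\prod_{j=1}^{N-1}P_{\operatorname{GL}(N-j)}(t;\lambda^j),$$ summed over tuples $\vec\lambda=(\lambda^1,\dots,\lambda^{N-1})$ with $\lambda^j$ a dominant coweight of $\operatorname{GL}(N-j)$, where, with $\lambda^0:=\lambda$, $$2\Delta(\lambda,\vec\lambda)=\sum_{j=1}^{N-1}\sum_{i,i'}|\lambda^{j-1}_i-\lambda^j_{i'}|-2\sum_{j=1}^{N-1}\sum_{i<i'}|\lambda^j_i-\lambda^j_{i'}|,$$ and $P_{\operatorname{GL}(n)}(t;\mu)=\prod_k\prod_{s=1}^{m_k}(1-t^{2s})^{-1}$, $m_k$ being the multiplicities of the distinct entries of $\mu$. Then $P_\lambda(t)\in t^{(N-1)|\lambda|-2n(\lambda)}\mathbb Z[[t]]$, and the coefficient of $t^{(N-1)|\lambda|-2n(\lambda)}$ equals $\dim V^\lambda$, the dimension of the irreducible $\operatorname{GL}(N)$-module of highest weight $\lambda$. (Equivalently, the costalk $H^{G_{\mathcal O}}_*(\tilde{\mathcal R}^\lambda)$ of the type $A_{N-1}$ theory, with the modified grading whose Hilbert series is $P_\lambda$, lives in degrees $\ge\dim\mathrm{Gr}^\lambda_{\operatorname{PGL}(N)}$ and its lowest component has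 dimension $\dim V^\lambda$.)
   Context: $P_{\operatorname{GL}(n)}(t;\mu)$ is the Poincaré series of $H^*_{\operatorname{Stab}_{\operatorname{GL}(n)}(\mu)}(\mathrm{pt})$. $(N-1)|\lambda|-2n(\lambda)=\langle2\rho^\vee,\lambda\rangle=\dim\mathrm{Gr}^\lambda_{\operatorname{PGL}(N)}$. The series $P_\lambda(t)$ is the (modified) monopole formula for the costalk at $\lambda$ of the type $A_{N-1}$ quiver gauge theory with $\dim V=(N-1,\dots,1)$, $\dim W=(N,0,\dots,0)$. *)

(* Defs.v *)
From HB Require Import structures.
From mathcomp Require Import all_boot all_order all_algebra.
Set Implicit Arguments. Unset Strict Implicit. Unset Printing Implicit Defensive.
Import Order.TTheory GRing.Theory Num.Theory.
Local Open Scope ring_scope.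

Definition isDomCoweight (n : nat) (mu : seq int) : bool :=
  (size mu == n) && sorted (fun x y : int => y <= x) mu.

Definition wsize (lam : seq int) : int := \sum_(x <- lam) x.

(* n(lambda) = sum_{i=1}^N (i-1) lambda_i  (0-indexed: sum_i i * lam_i) *)
Definition nfun (lam : seq int) : int :=
  \sum_(i < size lam) (i%:Z * nth 0 lam i).

(* The exponent (N-1)|lambda| - 2 n(lambda) = dim Gr^lambda_{PGL(N)} *)
Definition lowDeg (N : nat) (lam : seq int) : int :=
  (N.-1)%:Z * wsize lam - 2%:Z * nfun lam.

Definition pairAbsSum (a b : seq int) : int :=
  \sum_(x <- a) \sum_(y <- b) `|x - y|.

Definition selfAbsSum (a : seq int) : int :=
  \sum_(i < size a) \sum_(i' < size a | (i < i')%N) `|nth 0 a i - nth 0 a i'|.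

(* 2 Delta(lambda, vec lambda), where vec = [lambda^1; ...; lambda^{N-1}]
   and lambda^0 := lambda. *)
Definition twoDelta (lam : seq int) (vec : seq (seq int)) : int :=
  \sum_(p <- zip (lam :: vec) vec) pairAbsSum p.1 p.2
  - 2%:Z * \sum_(mu <- vec) selfAbsSum mu.

(* Admissible tuples: vec = (lambda^1, ..., lambda^{N-1}) with lambda^j a
   dominant coweight of GL(N-j).  (0-indexed: entry j is lambda^{j+1}.) *)
Definition admissible (N : nat) (vec : seq (seq int)) : Prop :=
  size vec = N.-1 /\
  forall j : nat, (j < N.-1)%N -> isDomCoweight (N.-1 - j) (nth [::] vec j).

(* P_{GL(n)}(t; mu) = prod_k prod_{s=1}^{m_k} (1 - t^{2s})^{-1}, m_k the
   multiplicities of the distinct entries of mu.  glFactors mu lists the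
   exponents 2s of all these geometric factors (1 - t^{2s})^{-1}. *)
Definition glFactors (mu : seq int) : seq nat :=
  flatten [seq [seq (s.*2)%N | s <- iota 1 (count_mem v mu)] | v <- undup mu].

Definition allFactors (vec : seq (seq int)) : seq nat :=
  flatten [seq glFactors mu | mu <- vec].

(* A monomial of the expanded series P_lambda(t): a tuple vec together with
   an exponent a_f >= 0 chosen for each geometric factor (1 - t^f)^{-1}. *)
Definition isTerm (N : nat) (x : seq (seq int) * seq nat) : Prop :=
  admissible N x.1 /\ size x.2 = size (allFactors x.1).

Definition termDeg (lam : seq int) (x : seq (seq int) * seq nat) : int :=
  twoDelta lam x.1
  + (\sum_(i < size x.2) (nth 0%N x.2 i * nth 0%N (allFactors x.1) i)%N)%:Z.

(* "The coefficient of t^m in P_lambda(t) is the (finite) integer c":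
   the monomials of degree m form a finite set of exactly c elements
   (all monomials have coefficient +1). *)
Definition coeffIs (N : nat) (lam : seq int) (m : int) (c : nat) : Prop :=
  exists s : seq (seq (seq int) * seq nat),
    [/\ uniq s, size s = c &
        forall x, x \in s <-> (isTerm N x /\ termDeg lam x = m)].

Definition weylDim (lam : seq int) : rat :=
  \prod_(i < size lam) \prod_(j < size lam | (i < j)%N)
     (((nth 0 lam i - nth 0 lam j)%:~R + (j - i)%:R) / (j - i)%:R).

(* Main.v *)
Require Import Defs.
From HB Require Import structures.
From mathcomp Require Import all_boot all_order all_algebra.
From mathcomp Require Import fingroup perm.
From mathcomp Require Import ring lra zify.
From Stdlib Require Import Classical.
Import Order.TTheory GRing.Theory Num.Theory.
Local Open Scope ring_scope.
Set Implicit Arguments. Unset Strict Implicit. Unset Printing Implicit Defensive.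

Definition ff (y : int) (i : nat) : int := \prod_(k <- iota 0 i) (y - k%:Z).
Definition ffp (i : nat) : {poly int} := \prod_(k <- iota 0 i) ('X - (k%:Z)%:P).
Definition VV (n : nat) (f : nat -> int) : int :=
  \prod_(i < n) \prod_(j < n | (i < j)%N) (f j - f i).

Lemma ffp_size i : size (ffp i) = i.+1.
Proof. by rewrite /ffp size_prod_XsubC size_iota. Qed.

Lemma ffp_lead i : (ffp i)`_i = 1.
Proof.
have := lead_coef_prod_XsubC (iota 0 i) predT (fun k : nat => k%:Z).
by rewrite /lead_coef -/(ffp i) ffp_size.
Qed.

Lemma ffp_horner i y : (ffp i).[y] = ff y i.
Proof. by rewrite /ffp horner_prod; apply: eq_bigr => k _; rewrite hornerXsubC. Qed.

Lemma ffV n (f : nat -> int) : \det (\matrix_(i < n, j < n) ff (f j) i) = VV n f.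
Proof.
pose L : 'M[int]_n := \matrix_(i < n, k < n) (ffp i)`_k.
have -> : \matrix_(i < n, j < n) ff (f j) i = L *m Vandermonde n (\row_(j < n) f j).
  apply/matrixP => i j; rewrite !mxE -ffp_horner (@horner_coef_wide _ n).
    by apply: eq_bigr => k _; rewrite !mxE.
  by rewrite ffp_size.
rewrite det_mulmx det_Vandermonde det_trig.
  rewrite big1 ?mul1r; last by move=> i _; rewrite mxE ffp_lead.
  by apply: eq_bigr => i _; apply: eq_bigr => j _; rewrite !mxE.
apply/is_trig_mxP => i j lt_ij; rewrite mxE nth_default // ffp_size.
exact: lt_ij.
Qed.

Fixpoint boxlist (Rs : seq (seq int)) : seq (seq int) :=
  match Rs with
  | [::] => [:: [::]]
  | R :: Rs' => [seq v :: y | v <- R, y <- boxlist Rs']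
  end.

Lemma box_prod (Rs : seq (seq int)) (h : nat -> int -> int) :
  \sum_(y <- boxlist Rs) \prod_(j < size Rs) h j (nth 0 y j) =
  \prod_(j < size Rs) \sum_(v <- nth [::] Rs j) h j v.
Proof.
elim: Rs h => [|R Rs IH] h /=.
  by rewrite big_seq1 !big_ord0.
rewrite big_allpairs_dep /= big_ord_recl /= big_distrl /=.
apply: eq_bigr => v _.
rewrite -(IH (fun j => h j.+1)) big_distrr /=.
apply: eq_bigr => y _.
by rewrite big_ord_recl /=; congr (_ * _); apply: eq_bigr => j _; rewrite lift0.
Qed.

Lemma det_box n (h : 'I_n -> 'I_n -> int -> int) (Rs : seq (seq int)) :
  size Rs = n ->
  \sum_(y <- boxlist Rs) \det (\matrix_(i < n, j < n) h i j (nth 0 y j)) =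
  \det (\matrix_(i < n, j < n) \sum_(v <- nth [::] Rs j) h i j v).
Proof.
move=> sz.
rewrite /determinant exchange_big /=; apply: eq_bigr => s _.
rewrite -big_distrr /=; congr (_ * _).
pose h' (j : nat) (v : int) := if (insub j : option 'I_n) is Some j' then h ((s^-1)%g j') j' v else 0.
have E1 : forall y : seq int, \prod_i (\matrix_(i0 < n, j < n) h i0 j (nth 0 y j)) i (s i)
   = \prod_(j < size Rs) h' j (nth 0 y j).
  move=> y; rewrite (reindex_inj (@perm_inj _ (s^-1)%g)) /=.
  subst n; apply: eq_bigr => j _; rewrite mxE permKV /h' valK //.
rewrite (eq_bigr _ (fun y _ => E1 y)) box_prod.
rewrite (reindex_inj (@perm_inj _ (s^-1)%g)) /=.
subst n; apply: eq_bigr => j _; rewrite mxE permKV /h' valK //.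
Qed.

Lemma ffS y i : ff y i.+1 = ff y i * (y - i%:Z).
Proof. by rewrite /ff -addn1 iotaD big_cat big_seq1. Qed.

Lemma ffS1 y i : ff (y + 1) i.+1 = (y + 1) * ff y i.
Proof.
rewrite /ff /= big_cons subr0; congr (_ * _).
rewrite -(addn0 1%N) iotaDl big_map; apply: eq_bigr => k _.
by rewrite PoszD addrKA.
Qed.

Lemma ff_diff y i : ff (y + 1) i.+1 - ff y i.+1 = i.+1%:Z * ff y i.
Proof. rewrite ffS1 ffS -[i.+1]addn1 PoszD; ring. Qed.

Lemma ff_tele a K i :
  i.+1%:Z * \sum_(k <- iota 0 K) ff (a + k%:Z) i = ff (a + K%:Z) i.+1 - ff a i.+1.
Proof.
elim: K => [|K IH]; first by rewrite big_nil mulr0 addr0 subrr.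
rewrite -[K.+1]addn1 iotaD big_cat big_seq1 /= add0n mulrDr IH -ff_diff PoszD.
rewrite [a + (_ + _)]addrA.
ring.
Qed.


Lemma ff0 y : ff y 0 = 1.
Proof. by rewrite /ff big_nil. Qed.

Lemma det_colop n (x : nat -> int) :
  \det (\matrix_(i < n.+1, j < n.+1) ff (x j) i) =
  \det (\matrix_(i < n, j < n) (ff (x j.+1) i.+1 - ff (x j) i.+1)).
Proof.
set A := \matrix_(i < n.+1, j < n.+1) ff (x j) i.
pose W : 'M[int]_n.+1 := \matrix_(k, j) ((k == j :> nat)%:R - (k.+1 == j :> nat)%:R).
have dW : \det W = 1.
  rewrite -det_tr det_trig.
    by apply: big1 => i _; rewrite !mxE eqxx eqn_leq ltnn /= subr0.
  apply/is_trig_mxP => i j lt_ij; rewrite !mxE.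
  rewrite (gtn_eqF lt_ij) (_ : (j.+1 == i :> nat) = false) ?subrr //.
  by apply/eqP => /= E; rewrite -E ltnNge leqW in lt_ij.
have AW : forall i j : 'I_n.+1, (A *m W) i j =
   A i j - (if nat_of_ord j is j'.+1 then ff (x j') i else 0).
  move=> i j; rewrite !mxE.
  under eq_bigr do rewrite !mxE mulrBr.
  rewrite sumrB (bigD1 j) //= eqxx mulr1 big1; last first.
    by move=> k /negbTE nkj; rewrite -val_eqE /= in nkj; rewrite nkj mulr0.
  rewrite addr0; congr (_ - _).
  case: j => [[|j'] Hj] /=.
    by rewrite big1 // => k _; rewrite mulr0.
  have Hj' : (j' < n.+1)%N by exact: ltnW.
  rewrite (bigD1 (Ordinal Hj')) //= eqxx mulr1 big1; last first.
    move=> k /negbTE nkj; rewrite -val_eqE /= in nkj.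
    by rewrite eqSS nkj mulr0.
  by rewrite addr0.
have Aij : forall i j, A i j = ff (x j) i by move=> i j; rewrite mxE.
rewrite -[\det A]mulr1 -dW -det_mulmx (expand_det_row _ ord0).
rewrite big_ord_recl big1 ?addr0; last first.
  by move=> j _; rewrite AW Aij lift0 /= !ff0 subrr mul0r.
rewrite AW Aij ff0 subr0 mul1r /cofactor /= expr0 mul1r.
congr (\det _); apply/matrixP => i j; rewrite [RHS]mxE [LHS]mxE [LHS]mxE AW Aij !lift0 /=.
by [].
Qed.

Lemma det_scale_rows n (c : nat -> int) (s : 'I_n -> 'I_n -> int) :
  \det (\matrix_(i < n, j < n) (c i * s i j)) =
  \prod_(i < n) c i * \det (\matrix_(i < n, j < n) s i j).
Proof.
have -> : \matrix_(i < n, j < n) (c i * s i j) =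
   diag_mx (\row_(i < n) c i) *m \matrix_(i < n, j < n) s i j.
  by rewrite mul_diag_mx; apply/matrixP => i j; rewrite !mxE.
by rewrite det_mulmx det_diag; congr (_ * _); apply: eq_bigr => i _; rewrite mxE.
Qed.

Lemma prod_succ n : \prod_(i < n) (i.+1)%:Z = (n`!)%:Z.
Proof.
elim: n => [|n IH]; first by rewrite big_ord0.
by rewrite big_ord_recr /= IH factS PoszM mulrC.
Qed.

Definition range (lo hi : int) : seq int :=
  if lo <= hi then [seq hi - k%:Z | k <- iota 0 `|hi - lo|%N.+1] else [::].

Fixpoint rngs (l : seq int) : seq (seq int) :=
  match l with
  | a :: ((b :: _) as l') => range b a :: rngs l'
  | _ => [::]
  end.

Definition interl (l : seq int) : seq (seq int) := boxlist (rngs l).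

Definition xf (l : seq int) (j : nat) : int := j%:Z - nth 0 l j.

Lemma size_rngs l : size (rngs l) = (size l).-1.
Proof. by elim: l => [|a [|b l] IH] //=; rewrite IH. Qed.

Lemma nth_rngs l j : (j.+1 < size l)%N ->
  nth [::] (rngs l) j = range (nth 0 l j.+1) (nth 0 l j).
Proof.
elim: l j => [|a [|b l] IH] [|j] //= H.
by rewrite IH.
Qed.

Definition dec (l : seq int) := sorted (fun x y : int => y <= x) l.

Lemma dec_nth l j : dec l -> (j.+1 < size l)%N -> nth 0 l j.+1 <= nth 0 l j.
Proof. by move/sortedP => H /H. Qed.

Lemma key_identity n (l : seq int) : size l = n.+1 -> dec l ->
  (n`!)%:Z * \sum_(mu <- interl l) VV n (xf mu) = VV n.+1 (xf l).
Proof.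
move=> sz dl.
rewrite -ffV det_colop.
pose K (j : nat) := (`|nth (0:int) l j - nth (0:int) l j.+1|%N.+1).
have xK : forall j : 'I_n, xf l j.+1 = xf l j + (K j)%:Z.
  move=> j; have := @dec_nth l j dl; rewrite sz ltnS ltn_ord => /(_ isT) le.
  rewrite /xf /K !intS gez0_abs ?subr_ge0 //; ring.
have -> : \matrix_(i < n, j < n) (ff (xf l j.+1) i.+1 - ff (xf l j) i.+1) =
   \matrix_(i < n, j < n) ((i.+1)%:Z * \sum_(k <- iota 0 (K j)) ff (xf l j + k%:Z) i).
  by apply/matrixP => i j; rewrite !mxE ff_tele xK.
rewrite (det_scale_rows (fun i => (i.+1)%:Z)) prod_succ; congr (_ * _).
rewrite /interl.
rewrite (eq_bigr (fun y => \det (\matrix_(i < n, j < n)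
    (fun (i j : 'I_n) v => ff (j%:Z - v) i) i j (nth 0 y j)))); last first.
  move=> mu _; rewrite -ffV.
  by congr (\det _); apply/matrixP => i j; rewrite !mxE.
rewrite (@det_box n (fun (i j : 'I_n) v => ff (j%:Z - v) i) (rngs l)); last by rewrite size_rngs sz.
congr (\det _); apply/matrixP => i j; rewrite !mxE.
rewrite nth_rngs; last by rewrite sz ltnS ltn_ord.
rewrite /range (dec_nth dl); last by rewrite sz ltnS ltn_ord.
rewrite big_map; apply: eq_bigr => k _; congr ff.
rewrite /xf; ring.
Qed.

Lemma sum_seq_ord (s : seq int) (F : int -> int) :
  \sum_(y <- s) F y = \sum_(i < size s) F (nth 0 s i).
Proof. by rewrite (big_nth 0) big_mkord. Qed.

Lemma selfAbsSum_cons a s :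
  selfAbsSum (a :: s) = \sum_(y <- s) `|a - y| + selfAbsSum s.
Proof.
rewrite /selfAbsSum /= big_ord_recl /=; congr (_ + _).
  rewrite big_mkcond big_ord_recl /= add0r sum_seq_ord; apply: eq_bigr => i _.
  by rewrite add0n.
apply: eq_bigr => i _; rewrite add0n /bump leq0n add1n.
rewrite big_mkcond big_ord_recl /= add0r [in RHS]big_mkcond /=.
by apply: eq_bigr => j _; rewrite /bump leq0n add1n ltnS.
Qed.

Lemma pair_consl a s t :
  pairAbsSum (a :: s) t = \sum_(y <- t) `|a - y| + pairAbsSum s t.
Proof. by rewrite /pairAbsSum big_cons. Qed.

Lemma pair_consr s b t :
  pairAbsSum s (b :: t) = \sum_(x <- s) `|x - b| + pairAbsSum s t.
Proof. by rewrite /pairAbsSum -big_split /=; apply: eq_bigr => x _; rewrite big_cons. Qed.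

Definition EE (a b : seq int) : int := pairAbsSum a b - selfAbsSum a - selfAbsSum b.

Definition slack (u : int) : int := `|u| - u.

Lemma slack_ge0 u : 0 <= slack u.
Proof. by rewrite /slack subr_ge0 ler_norm. Qed.

Lemma slack_geN u : - u <= slack u.
Proof. have := normr_ge0 u; rewrite /slack; lra. Qed.

Lemma slack_eq0 u : (slack u == 0) = (0 <= u).
Proof.
rewrite /slack subr_eq0; apply/eqP/idP => [<-|h]; first exact: normr_ge0.
exact: ger0_norm.
Qed.

Lemma sum_cminus (s : seq int) c : \sum_(x <- s) (c - x) = c *+ size s - \sum_(x <- s) x.
Proof.
elim: s => [|x s IH]; first by rewrite !big_nil subr0.
rewrite !big_cons IH /= mulrS; ring.
Qed.

Lemma EE_cons a0 a' b0 b' :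
  all (fun x => x <= a0) a' -> all (fun y => y <= b0) b' -> size a' = (size b').+1 ->
  EE (a0 :: a') (b0 :: b') = EE a' b' +
   (slack (a0 - b0) + \sum_(y <- b') slack (a0 - y) + \sum_(x <- a') slack (b0 - x)).
Proof.
move=> /allP ha /allP hb sz.
rewrite /EE pair_consl pair_consr !selfAbsSum_cons big_cons.
have e1 : \sum_(x <- a') `|a0 - x| = \sum_(x <- a') (a0 - x).
  by apply: eq_big_seq => x /ha hx; rewrite ger0_norm // subr_ge0.
have e2 : \sum_(y <- b') `|b0 - y| = \sum_(y <- b') (b0 - y).
  by apply: eq_big_seq => y /hb hy; rewrite ger0_norm // subr_ge0.
have e3 : \sum_(x <- a') `|x - b0| = \sum_(x <- a') slack (b0 - x) + \sum_(x <- a') (b0 - x).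
  by rewrite -big_split /=; apply: eq_bigr => x _; rewrite /slack distrC subrK.
have e4 : \sum_(y <- b') `|a0 - y| = \sum_(y <- b') slack (a0 - y) + \sum_(y <- b') (a0 - y).
  by rewrite -big_split /=; apply: eq_bigr => y _; rewrite /slack subrK.
rewrite e1 e2 e3 e4 !sum_cminus sz /slack mulrS.
ring.
Qed.

Lemma dec_head a0 a' : dec (a0 :: a') -> all (fun x => x <= a0) a'.
Proof.
move=> h; apply: (order_path_min _ h) => x y z hyx hzy /=.
exact: le_trans hzy hyx.
Qed.

Lemma dec_tail a0 a' : dec (a0 :: a') -> dec a'.
Proof. exact: path_sorted. Qed.

Lemma mem_range v lo hi : (v \in range lo hi) = (lo <= v <= hi).
Proof.
rewrite /range; case: ifP => hlh; last first.
  rewrite in_nil; apply/esym/negbTE/negP => /andP[h1 h2].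
  by move: hlh; rewrite (le_trans h1 h2).
apply/mapP/idP => [[k] |/andP[h1 h2]].
  rewrite mem_iota add0n ltnS => hk ->.
  apply/andP; split; last by rewrite gerDl oppr_le0.
  have : (k%:Z <= `|hi - lo|%N%:Z) by rewrite lez_nat.
  rewrite gez0_abs ?subr_ge0 //; lia.
exists `|hi - v|%N; last by rewrite gez0_abs ?subr_ge0 // opprB addrC subrK.
have g1 : 0 <= hi - v by rewrite subr_ge0.
have g2 : 0 <= hi - lo by rewrite subr_ge0 (le_trans h1 h2).
rewrite mem_iota add0n ltnS -lez_nat !gez0_abs //; lia.
Qed.

Lemma slack0 u : 0 <= u -> slack u = 0.
Proof. by move=> h; rewrite /slack ger0_norm // subrr. Qed.

Lemma interl_cons2 a0 a1 a'' :
  interl [:: a0, a1 & a''] = [seq v :: y | v <- range a1 a0, y <- interl (a1 :: a'')].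
Proof. by []. Qed.

Lemma mem_interl_cons2 a0 a1 a'' b0 b' :
  (b0 :: b' \in interl [:: a0, a1 & a'']) = (a1 <= b0 <= a0) && (b' \in interl (a1 :: a'')).
Proof.
rewrite interl_cons2; apply/allpairsPdep/andP => [[v [y [hv hy [-> ->]]]]|[hb hb']].
  by rewrite -mem_range.
by exists b0, b'; rewrite mem_range.
Qed.

Lemma selfAbsSum_nil : selfAbsSum [::] = 0.
Proof. by rewrite /selfAbsSum big_ord0. Qed.

Lemma selfAbsSum1 a : selfAbsSum [:: a] = 0.
Proof. by rewrite selfAbsSum_cons big_nil selfAbsSum_nil addr0. Qed.

Lemma EE_nil a0 : EE [:: a0] [::] = 0.
Proof. by rewrite /EE /pairAbsSum big_seq1 big_nil selfAbsSum1 selfAbsSum_nil !subr0. Qed.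

Lemma sum_slack_ge0 (s : seq int) (F : int -> int) : 0 <= \sum_(x <- s) slack (F x).
Proof. by apply: sumr_ge0 => x _; exact: slack_ge0. Qed.

Lemma EE_props n : forall a b, dec a -> dec b -> size a = n.+1 -> size b = n ->
  [/\ 0 <= EE a b, (EE a b = 0 <-> b \in interl a) &
      forall lo hi, (forall x, x \in a -> lo <= x <= hi) ->
        forall y, y \in b -> lo - EE a b <= y <= hi + EE a b].
Proof.
elim: n => [|n IH] a b da db sa sb.
  case: a sa da => [|a0 [|? ?]] // _ _; case: b sb db => // _ _.
  by rewrite EE_nil; split => //; split.
case: a sa da => [|a0 [|a1 a'']] // sa da; move: sa => /= [sa].
case: b sb db => [|b0 b'] // sb db; move: sb => /= [sb].
have ha := dec_head da; have hb := dec_head db.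
have da' := dec_tail da; have db' := dec_tail db.
rewrite (EE_cons ha hb); last by rewrite /= sa sb.
have [IH1 IH2 IH3] := IH _ _ da' db' (congr1 S sa) sb.
set E' := EE _ b'.
rewrite -/E' in IH1 IH2 IH3.
set I1 := slack (a0 - b0).
set I2 := \sum_(y <- b') slack (a0 - y).
set I3 := \sum_(x <- a1 :: a'') slack (b0 - x).
have g1 : 0 <= I1 by exact: slack_ge0.
have g2 : 0 <= I2 by exact: sum_slack_ge0.
have g3 : 0 <= I3 by exact: sum_slack_ge0.
have I3e : I3 = slack (b0 - a1) + \sum_(x <- a'') slack (b0 - x) by rewrite /I3 big_cons.
have g4 : 0 <= \sum_(x <- a'') slack (b0 - x) by exact: sum_slack_ge0.
have g5 : 0 <= slack (b0 - a1) by exact: slack_ge0.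
split.
- lra.
- rewrite mem_interl_cons2; split.
    move=> h0.
    have e1 : I1 = 0 by lra.
    have e3 : slack (b0 - a1) = 0 by lra.
    have e4 : E' = 0 by lra.
    move/eqP: e1; rewrite slack_eq0 subr_ge0 => ->.
    move/eqP: e3; rewrite slack_eq0 subr_ge0 => -> /=.
    by apply/IH2.
  case/andP => /andP[h1 h2] /IH2 e4.
  rewrite /I1 slack0 ?subr_ge0 //.
  rewrite /I2 big1_seq ?addr0; last first.
    move=> y /andP[_ yb]; apply: slack0; rewrite subr_ge0.
    exact: le_trans (allP hb y yb) h2.
  rewrite /I3 big1_seq ?addr0 // => x /andP[_ xa]; apply: slack0; rewrite subr_ge0.
  move: xa; rewrite inE => /orP[/eqP -> //|xa].
  exact: le_trans (allP (dec_head da') x xa) h1.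
- move=> lo hi hx y.
  have ha0 := hx a0 (mem_head _ _).
  have ha1 : lo <= a1 <= hi by apply: hx; rewrite inE mem_head orbT.
  have hx' : forall x, x \in a1 :: a'' -> lo <= x <= hi.
    by move=> x xa; apply: hx; rewrite inE xa orbT.
  have s1 := slack_geN (a0 - b0).
  have s2 := slack_geN (b0 - a1).
  rewrite inE => /orP[/eqP ->|yb].
    move: ha0 ha1 => /andP[? ?] /andP[? ?].
    rewrite -/I1 in s1; apply/andP; split; lra.
  have := IH3 lo hi hx' y yb; rewrite -/E' => /andP[? ?].
  apply/andP; split; lra.
Qed.

Fixpoint Exc (lam : seq int) (vec : seq (seq int)) : int :=
  match vec with [::] => 0 | mu :: v => EE lam mu + Exc mu v end.

Fixpoint gt (n : nat) (lam : seq int) : seq (seq (seq int)) :=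
  match n with
  | 0 => [:: [::]]
  | n'.+1 => [seq mu :: v | mu <- interl lam, v <- gt n' mu]
  end.

Lemma twoDelta_nil lam : twoDelta lam [::] = 0.
Proof. by rewrite /twoDelta /= !big_nil mulr0 subr0. Qed.

Lemma twoDelta_cons lam mu v :
  twoDelta lam (mu :: v) = EE lam mu + selfAbsSum lam - selfAbsSum mu + twoDelta mu v.
Proof. rewrite /twoDelta /= !big_cons /EE /=; ring. Qed.

Lemma isDomE n mu : isDomCoweight n mu = (size mu == n) && dec mu.
Proof. by []. Qed.

Lemma adm_cons n mu v :
  admissible n.+2 (mu :: v) <-> isDomCoweight n.+1 mu /\ admissible n.+1 v.
Proof.
rewrite /admissible /=; split.
  case=> [[sv] h]; split; first by have := h 0%N isT.
  by split => // j hj; have := h j.+1 hj; rewrite subSS.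
case=> hmu [sv h]; split; first by rewrite sv.
by case=> [|j] hj //=; rewrite subSS; apply: h.
Qed.

Lemma adm1 v : admissible 1 v <-> v = [::].
Proof.
rewrite /admissible /=; split; first by case=> /size0nil.
by move=> ->; split.
Qed.

Lemma interl_props lam mu : dec lam -> mu \in interl lam ->
  dec mu /\ size mu = (size lam).-1.
Proof.
elim: lam mu => [|a0 [|a1 a''] IH] mu dl.
- by rewrite inE => /eqP ->.
- by rewrite inE => /eqP ->.
case: mu => [|b0 b'].
  by move/allpairsPdep => [v [y [_ _ //]]].
rewrite mem_interl_cons2 => /andP[/andP[h1 h2] hb'].
have [db' sb'] := IH _ (dec_tail dl) hb'.
split; last by rewrite /= sb'.
case: b' hb' db' sb' => [|b1 b''] //= hb' db' sb'.
rewrite db' andbT.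
move: hb'; case: a'' dl {IH} sb' => [|a2 a'''] //= dl sb'.
rewrite mem_interl_cons2 => /andP[/andP[_ h3] _].
exact: le_trans h3 h1.
Qed.

Lemma chain n : forall lam v, dec lam -> size lam = n.+1 -> admissible n.+1 v ->
  [/\ twoDelta lam v = selfAbsSum lam + Exc lam v, 0 <= Exc lam v,
      (Exc lam v = 0 <-> v \in gt n lam) &
      forall lo hi, (forall x, x \in lam -> lo <= x <= hi) ->
        forall mu y, mu \in v -> y \in mu -> lo - Exc lam v <= y <= hi + Exc lam v].
Proof.
elim: n => [|n IH] lam v dl sl av.
  move/adm1: av => ->.
  case: lam sl dl => [|a0 [|? ?]] // _ _.
  rewrite twoDelta_nil selfAbsSum1 /= addr0; split => //.
case: v av => [|mu v'].
  by case.
move/adm_cons => [hmu av'].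
move: hmu; rewrite isDomE => /andP[/eqP smu dmu].
have [E1 E2 E3] := EE_props dl dmu sl smu.
have [I1 I2 I3 I4] := IH _ _ dmu smu av'.
rewrite /= twoDelta_cons I1.
split.
- ring.
- lra.
- split.
    move=> h0.
    have e1 : EE lam mu = 0 by lra.
    have e2 : Exc mu v' = 0 by lra.
    by apply/allpairsPdep; exists mu, v'; split => //; [apply/E2 | apply/I3].
  move/allpairsPdep => [mu1 [v1 [hmu1 hv1 [e1 e2]]]]; subst mu1 v1.
  by rewrite (proj2 E2 hmu1) (proj2 I3 hv1) addr0.
- move=> lo hi hx mu1 y; rewrite inE => /orP[/eqP ->|hmu1] hy.
    have := E3 lo hi hx y hy => /andP[? ?]; apply/andP; split; lra.
  have hx' : forall x, x \in mu -> lo - EE lam mu <= x <= hi + EE lam mu.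
    by move=> x; apply: E3.
  have := I4 _ _ hx' mu1 y hmu1 hy => /andP[? ?]; apply/andP; split; lra.
Qed.

Lemma gt_adm n : forall lam v, dec lam -> size lam = n.+1 -> v \in gt n lam ->
  admissible n.+1 v.
Proof.
elim: n => [|n IH] lam v dl sl.
  by rewrite inE => /eqP ->; apply/adm1.
move/allpairsPdep => [mu [v' [hmu hv' ->]]].
have [dmu smu] := interl_props dl hmu.
rewrite sl /= in smu.
apply/adm_cons; split; first by rewrite isDomE smu eqxx.
exact: IH dmu smu hv'.
Qed.

Definition VVi (n : nat) : int := VV n (fun j => j%:Z).

Lemma xf_zero k j : xf (nseq k 0) j = j%:Z.
Proof. by rewrite /xf nth_nseq; case: ifP; rewrite subr0. Qed.

Lemma interl_zero n : interl (nseq n.+1 0) = [:: nseq n 0].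
Proof.
elim: n => [|n IH] //.
by rewrite [nseq _ _]/= interl_cons2 -[0 :: nseq n 0]/(nseq n.+1 0) IH.
Qed.

Lemma VVi_rec n : VVi n.+1 = (n`!)%:Z * VVi n.
Proof.
have dz : dec (nseq n.+1 (0:int)).
  by elim: n => // n /= ->; rewrite lexx.
have := key_identity (size_nseq n.+1 (0:int)) dz.
rewrite interl_zero big_seq1.
have -> : VV n (xf (nseq n 0)) = VVi n.
  by rewrite /VVi /VV; apply: eq_bigr => i _; apply: eq_bigr => j _; rewrite !xf_zero.
move=> ->; rewrite /VVi /VV; apply: eq_bigr => i _; apply: eq_bigr => j _.
by rewrite !xf_zero.
Qed.

Lemma VVi_gt0 n : 0 < VVi n.
Proof.
rewrite /VVi /VV; apply: prodr_gt0 => i _; apply: prodr_gt0 => j hij.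
by rewrite subr_gt0 ltz_nat.
Qed.

Lemma weyl_VV (l : seq int) :
  weylDim l = (VV (size l) (xf l))%:~R / (VVi (size l))%:~R.
Proof.
rewrite /weylDim /VVi /VV !rmorph_prod -prodf_div; apply: eq_bigr => i _.
rewrite !rmorph_prod -prodf_div; apply: eq_bigr => j hij.
congr (_ / _).
  have -> : xf l j - xf l i = (l`_i - l`_j) + ((j - i)%N)%:Z.
    by rewrite /xf -subzn ?(ltnW hij) //; ring.
  by rewrite [RHS]intrD -pmulrn.
by rewrite subzn ?(ltnW hij) //= -pmulrn.
Qed.

Lemma weyl_branch n (l : seq int) : dec l -> size l = n.+2 ->
  weylDim l = \sum_(mu <- interl l) weylDim mu.
Proof.
move=> dl sl.
have e : forall mu, mu \in interl l ->
    weylDim mu = (VV n.+1 (xf mu))%:~R / (VVi n.+1)%:~R.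
  by move=> mu hmu; have [_ smu] := interl_props dl hmu; rewrite weyl_VV smu sl.
rewrite (eq_big_seq _ e) -mulr_suml -rmorph_sum weyl_VV sl.
rewrite -(key_identity sl dl) VVi_rec !intrM.
have h1 : ((n.+1)`!)%:Z%:~R != 0 :> rat by rewrite intr_eq0 eqz_nat -lt0n fact_gt0.
have h2 : (VVi n.+1)%:~R != 0 :> rat by rewrite intr_eq0 gt_eqF ?VVi_gt0.
by rewrite invfM mulrACA divff // mul1r.
Qed.

Lemma gt_count n : forall l : seq int, dec l -> size l = n.+1 ->
  (size (gt n l))%:R = weylDim l :> rat.
Proof.
elim: n => [|n IH] l dl sl.
  rewrite /= /weylDim; move: (size l) sl => m ->.
  by rewrite big_ord1 big_mkcond big_ord1.
rewrite (weyl_branch dl sl) /= size_allpairs_dep sumnE big_map natr_sum.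
apply: eq_big_seq => mu hmu; have [dmu smu] := interl_props dl hmu.
by apply: IH => //; rewrite smu sl.
Qed.

Lemma cons_allpairs_uniq (A : eqType) (s : seq A) (t : A -> seq (seq A)) :
  uniq s -> (forall x, x \in s -> uniq (t x)) ->
  uniq [seq x :: y | x <- s, y <- t x].
Proof.
elim: s => [|a s IH] //= /andP[nas us] ht.
rewrite cat_uniq IH ?andbT; last by move=> x xs; apply: ht; rewrite inE xs orbT.
rewrite map_inj_uniq; last by move=> y1 y2 [].
rewrite ht ?mem_head //=.
apply/hasPn => z /allpairsPdep [x [y [xs _ ->]]].
apply/mapP => [[y' _ [ex _]]].
  by move: nas; rewrite -ex xs.
exact: us.
Qed.

Lemma range_uniq lo hi : uniq (range lo hi).
Proof.
rewrite /range; case: ifP => // _.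
rewrite map_inj_uniq ?iota_uniq // => a b /= h.
have : a%:Z = b%:Z by lra.
by case.
Qed.

Lemma boxlist_uniq Rs : all (@uniq _) Rs -> uniq (boxlist Rs).
Proof.
elim: Rs => [|R Rs IH] //= /andP[uR uRs].
by apply: cons_allpairs_uniq => // x _; apply: IH.
Qed.

Lemma interl_uniq l : uniq (interl l).
Proof.
apply: boxlist_uniq.
elim: l => [|a [|b l] IH] //=.
by rewrite range_uniq.
Qed.

Lemma gt_uniq n : forall l, uniq (gt n l).
Proof.
elim: n => [|n IH] l //=.
apply: cons_allpairs_uniq; [exact: interl_uniq | move=> x _; exact: IH].
Qed.

Lemma self_lowDeg l : dec l -> selfAbsSum l = lowDeg (size l) l.
Proof.
elim: l => [|a s IH] dl.
  by rewrite selfAbsSum_nil /lowDeg /wsize /nfun !big_nil big_ord0 /=; ring.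
have ha := dec_head dl.
rewrite selfAbsSum_cons IH ?(dec_tail dl) //.
have -> : \sum_(y <- s) `|a - y| = \sum_(y <- s) (a - y).
  by apply: eq_big_seq => y /(allP ha) hy; rewrite ger0_norm // subr_ge0.
rewrite sum_cminus /lowDeg /wsize /nfun big_cons big_ord_recl /= mul0r add0r.
have -> : \sum_(i < size s) ((bump 0 i)%:Z * (a :: s)`_(bump 0 i)) =
   \sum_(i < size s) (i%:Z * s`_i) + \sum_(y <- s) y.
  rewrite sum_seq_ord -big_split /=; apply: eq_bigr => i _.
  by rewrite /bump /= add1n intS; ring.
case E: (size s) => [|k] /=.
  by move/size0nil: E => ->; rewrite !big_nil big_ord0 mulr0n; ring.
rewrite intS mulrS.
ring.
Qed.

Fixpoint allseqs (A : eqType) (L : seq A) (k : nat) : seq (seq A) :=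
  match k with
  | 0 => [:: [::]]
  | k'.+1 => [seq a :: y | a <- L, y <- allseqs L k']
  end.

Lemma mem_allseqs (A : eqType) (L : seq A) (y : seq A) :
  (forall a, a \in y -> a \in L) -> y \in allseqs L (size y).
Proof.
elim: y => [|a y IH] h //=.
apply/allpairsPdep; exists a, y; split => //.
  by apply: h; rewrite mem_head.
by apply: IH => b hb; apply: h; rewrite inE hb orbT.
Qed.

Lemma abs_le_sum (s : seq int) x : x \in s -> `|x| <= \sum_(y <- s) `|y|.
Proof.
elim: s => [|a s IH] //; rewrite inE big_cons => /orP[/eqP ->|hx].
  by rewrite lerDl sumr_ge0.
by rewrite (le_trans (IH hx)) // lerDr.
Qed.

Lemma finite_sub (T : eqType) (P : T -> Prop) (s0 : seq T) :
  exists s, uniq s /\ forall x, x \in s <-> (x \in s0 /\ P x).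
Proof.
elim: s0 => [|a s0 [s [us hs]]].
  by exists [::]; split => // x; split => // [[]].
case: (classic (P a)) => hPa.
  exists (undup (a :: s)); split; first exact: undup_uniq.
  move=> x; rewrite mem_undup !inE; split.
    by case/orP => [/eqP ->|/hs [h1 h2]]; [rewrite eqxx | rewrite h1 orbT].
  case => /orP[/eqP ->|h1] h2; first by rewrite eqxx.
  by apply/orP; right; apply/hs.
exists s; split => // x; rewrite hs inE; split.
  by case => h1 h2; rewrite h1 orbT.
case => /orP[/eqP ex|h1] h2; last by [].
by rewrite ex in h2.
Qed.

Lemma term_le_sum n (E : 'I_n -> nat) i : (E i <= \sum_(j < n) E j)%N.
Proof. by rewrite (bigD1 i) //= leq_addr. Qed.

Lemma allFactors_pos vec f : f \in allFactors vec -> (0 < f)%N.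
Proof.
move/flatten_mapP => [mu _] /flatten_mapP [v _] /mapP [s].
by rewrite mem_iota => /andP[h1 _] ->; rewrite double_gt0.
Qed.

Lemma S_zero (e F : seq nat) : size e = size F -> (forall f, f \in F -> 0 < f)%N ->
  (\sum_(i < size e) (nth 0 e i * nth 0 F i))%N = 0%N -> e = nseq (size e) 0%N.
Proof.
move=> sz hF h0; apply: (@eq_from_nth _ 0%N); first by rewrite size_nseq.
move=> i hi; rewrite nth_nseq hi.
have := term_le_sum (fun j : 'I_(size e) => (nth 0 e j * nth 0 F j)%N) (Ordinal hi).
rewrite h0 leqn0 muln_eq0 /= => /orP[/eqP //|/eqP hz].
have : (0 < nth 0 F i)%N by apply: hF; rewrite mem_nth // -sz.
by rewrite hz.
Qed.

Lemma S_bound (e F : seq nat) k : size e = size F -> (forall f, f \in F -> 0 < f)%N ->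
  k \in e -> (k <= \sum_(i < size e) (nth 0 e i * nth 0 F i))%N.
Proof.
move=> sz hF hk.
have hi : (index k e < size e)%N by rewrite index_mem.
have := term_le_sum (fun j : 'I_(size e) => (nth 0 e j * nth 0 F j)%N) (Ordinal hi).
rewrite /= nth_index //; apply: leq_trans; apply: leq_pmulr.
by apply: hF; rewrite mem_nth // -sz.
Qed.

Definition Sx (x : seq (seq int) * seq nat) : nat :=
  \sum_(i < size x.2) (nth 0%N x.2 i * nth 0%N (allFactors x.1) i)%N.

Lemma adm_sizes n v mu : admissible n.+1 v -> mu \in v -> (size mu <= n)%N /\ dec mu.
Proof.
case=> sv h hmu.
have hi : (index mu v < n)%N by rewrite -[n]/(n.+1.-1) -sv index_mem.
have := h _ hi; rewrite nth_index // isDomE => /andP[/eqP -> ->].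
by split => //; rewrite leq_subr.
Qed.

Unset Implicit Arguments.

Theorem mainTheorem11 (N : nat) (lam : seq int) :
  (1 <= N)%N -> isDomCoweight N lam ->
  (forall m : int, exists c : nat, coeffIs N lam m c) /\
  (forall m : int, m < lowDeg N lam -> coeffIs N lam m 0) /\
  (exists c : nat, coeffIs N lam (lowDeg N lam) c /\ c%:Q = weylDim lam).
Proof.
case: N => [|n] // _ hd.
move: hd; rewrite isDomE => /andP[/eqP sl dl].
have lowE : lowDeg n.+1 lam = selfAbsSum lam by rewrite (self_lowDeg dl) sl.
have key : forall x, isTerm n.+1 x ->
  [/\ termDeg lam x = lowDeg n.+1 lam + Exc lam x.1 + (Sx x)%:Z, 0 <= Exc lam x.1,
      (Exc lam x.1 = 0 <-> x.1 \in gt n lam) &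
      forall lo hi, (forall y, y \in lam -> lo <= y <= hi) ->
        forall mu y, mu \in x.1 -> y \in mu -> lo - Exc lam x.1 <= y <= hi + Exc lam x.1].
  move=> x [hx _]; have [C1 C2 C3 C4] := chain dl sl hx.
  by split => //; rewrite /termDeg C1 lowE.
split; last split.
- move=> m.
  set D := m - lowDeg n.+1 lam.
  set B := \sum_(y <- lam) `|y|.
  set R := B + `|D|.
  set d := `|D|%N.
  pose Ls := flatten [seq allseqs (range (- R) R) k | k <- iota 0 n.+1].
  pose s0 := [seq (v, e) | v <- allseqs Ls n,
                 e <- allseqs (iota 0 d.+1) (size (allFactors v))].
  have [s [us hs]] := finite_sub (fun x => isTerm n.+1 x /\ termDeg lam x = m) s0.
  exists (size s), s; split => // x; rewrite hs; split; first by case.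
  move=> hP; split => //; case: hP => hx hdeg.
  have [K1 K2 K3 K4] := key x hx.
  have hS : 0 <= (Sx x)%:Z by [].
  have hED : Exc lam x.1 + (Sx x)%:Z = D by rewrite /D -hdeg K1; ring.
  have hDn := ler_norm D.
  have hB : forall y, y \in lam -> - B <= y <= B.
    move=> y hy; have := abs_le_sum hy; rewrite -/B.
    by move=> h; apply/andP; split; [rewrite lerNl; apply: le_trans h; rewrite -normrN ler_norm | apply: le_trans h; exact: ler_norm].
  case: x hx hdeg K1 K2 K3 K4 hS hED => v e hx hdeg /= K1 K2 K3 K4 hS hED.
  apply/allpairsPdep; exists v, e; split => //.
    case: (hx) => [[sv _] se].
    rewrite -[n]sv; apply: mem_allseqs => mu hmu.
    have [smu _] := adm_sizes hx.1 hmu.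
    apply/flatten_mapP; exists (size mu); first by rewrite mem_iota add0n ltnS.
    apply: mem_allseqs => y hy; rewrite mem_range.
    have := K4 _ _ hB mu y hmu hy => /andP[h1 h2].
    rewrite /R; apply/andP; split; lra.
  case: hx => _ /= se; rewrite -se; apply: mem_allseqs => k hk.
  rewrite -[0%N :: iota 1 d]/(iota 0 d.+1) mem_iota add0n ltnS.
  have hk' := S_bound se (@allFactors_pos v) hk.
  have hSd : (Sx (v, e) <= d)%N by rewrite -lez_nat /d abszE; lra.
  exact: leq_trans hk' hSd.
- move=> m hm; exists [::]; split => // x; split => // -[hx hdeg].
  have [K1 K2 K3 K4] := key x hx.
  have hS : 0 <= (Sx x)%:Z by [].
  rewrite K1 in hdeg; move: hm K2 hS hdeg; clear; lra.
exists (size (gt n lam)); split; last by rewrite -(gt_count dl sl) -pmulrn.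
exists [seq (v, nseq (size (allFactors v)) 0%N) | v <- gt n lam]; split.
- by rewrite map_inj_uniq ?gt_uniq // => v1 v2 [].
- by rewrite size_map.
move=> x; split.
  move/mapP => [v hv ->].
  have hadm := gt_adm dl sl hv.
  have hx : isTerm n.+1 (v, nseq (size (allFactors v)) 0%N) by split => //; rewrite size_nseq.
  split => //; have [K1 K2 K3 K4] := key _ hx.
  rewrite K1 /= (proj2 K3 hv) addr0.
  rewrite /Sx /= big1 ?addr0 // => i _.
  by rewrite nth_nseq; case: ifP.
case => hx hdeg.
have [K1 K2 K3 K4] := key x hx.
have hS : 0 <= (Sx x)%:Z by [].
have e1 : Exc lam x.1 = 0 by lra.
have e2 : Sx x = 0%N by apply/eqP; rewrite -eqz_nat; apply/eqP; lra.
apply/mapP; exists x.1; first exact/K3.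
case: x hx e2 {K1 K2 K3 K4 hS e1 hdeg} => v e [hv se] /= e2.
f_equal; rewrite -se; apply: (S_zero se); [exact: allFactors_pos | exact: e2].
Qed.
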